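(* If a Collatz trajectory $(n,C(n),C^2(n),\dots)$, $n\in\mathbb{N}^+$, does not contain $1$, then for every $r\in\{2,3,4,6\}$ it contains some element congruent to $r$ modulo $8$.
   Context: $C:\mathbb{N}^+\to\mathbb{N}^+$ is the Collatz function $C(n)=n/2$ for $n$ even and $C(n)=3n+1$ for $n$ odd. *)

(* Defs.v *)
From mathcomp Require Import all_boot.

Definition collatz (n : nat) : nat := if odd n then 3 * n + 1 else n %/ 2.

(* Main.v *)
Require Import Defs.
From mathcomp Require Import all_boot.
From mathcomp Require Import zify.

Lemma c_odd x : x %% 2 = 1 -> collatz x = 3 * x + 1.
Proof. by rewrite /collatz modn2; case: (odd x). Qed.

Lemma c_even x : x %% 2 = 0 -> collatz x = x %/ 2.
Proof. by rewrite /collatz modn2; case: (odd x). Qed.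

Lemma lemD m : 0 < m -> (forall k, iter k collatz m <> 1) ->
  exists k, iter k collatz m %% 4 = 3.
Proof.
elim/ltn_ind: m => m IH Hm H1.
have H0 := H1 0; simpl in H0.
case: (boolP (m %% 4 == 3)) => [/eqP h|/eqP h3]; first by exists 0.
case: (boolP (m %% 2 == 0)) => [/eqP he|/eqP ho].
- have [k Hk] : exists k, iter k collatz (m %/ 2) %% 4 = 3.
    apply: IH; try lia.
    by move=> k; rewrite -c_even // -iterSr; apply: H1.
  by exists k.+1; rewrite iterSr c_even.
- have ho' : m %% 2 = 1 by lia.
  have e1 : collatz m = 3 * m + 1 by rewrite c_odd.
  have e2 : collatz (3 * m + 1) = (3 * m + 1) %/ 2 by rewrite c_even; lia.
  have e3 : collatz ((3 * m + 1) %/ 2) = (3 * m + 1) %/ 2 %/ 2 by rewrite c_even; lia.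
  have Hi : iter 3 collatz m = (3 * m + 1) %/ 2 %/ 2 by rewrite /= e1 e2 e3.
  have [k Hk] : exists k, iter k collatz ((3 * m + 1) %/ 2 %/ 2) %% 4 = 3.
    apply: IH; try lia.
    by move=> k; rewrite -Hi -iterD; apply: H1.
  by exists (k + 3); rewrite iterD Hi.
Qed.

Lemma lemP3 j : forall x, x %% 4 = 3 -> ~ (2 ^ j %| x.+1) ->
  exists k, iter k collatz x %% 8 = 3.
Proof.
elim: j => [|j IH] x Hx Hd; first by case: Hd; rewrite expn0 dvd1n.
case: (boolP (x %% 8 == 3)) => [/eqP h|/eqP h7]; first by exists 0.
have e1 : collatz x = 3 * x + 1 by rewrite c_odd; lia.
have e2 : collatz (3 * x + 1) = (3 * x + 1) %/ 2 by rewrite c_even; lia.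
have Hi : iter 2 collatz x = (3 * x + 1) %/ 2 by rewrite /= e1 e2.
have [k Hk] : exists k, iter k collatz ((3 * x + 1) %/ 2) %% 8 = 3.
  apply: IH; first lia.
  move=> Hdv; apply: Hd; move: Hdv.
  have [q [-> ->]] : exists q, ((3 * x + 1) %/ 2).+1 = 3 * q /\ x.+1 = 2 * q.
    by exists (x.+1 %/ 2); lia.
  rewrite Gauss_dvdr; last by apply: coprimeXl.
  by rewrite expnS dvdn_pmul2l.
by exists (k + 2); rewrite iterD Hi.
Qed.

Lemma lem3 x : x %% 4 = 3 -> exists k, iter k collatz x %% 8 = 3.
Proof.
move=> Hx; apply: (lemP3 x.+1) => // Hd.
have := dvdn_leq (ltn0Sn x) Hd.
have := ltn_expl x.+1 (isT : 1 < 2).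
lia.
Qed.

Lemma lemF e : 0 < e -> e %% 4 = 0 -> exists k, iter k collatz e %% 8 = 4.
Proof.
elim/ltn_ind: e => e IH He H4.
case: (boolP (e %% 8 == 4)) => [/eqP h|/eqP h8]; first by exists 0.
have [k Hk] : exists k, iter k collatz (e %/ 2) %% 8 = 4 by apply: IH; lia.
by exists k.+1; rewrite iterSr c_even //; lia.
Qed.

Lemma iter_pos k m : 0 < m -> 0 < iter k collatz m.
Proof.
move=> Hm; elim: k => [|k IH] //=.
case: (boolP (iter k collatz m %% 2 == 0)) => [/eqP h|/eqP h].
- rewrite c_even //. lia.
- rewrite c_odd; lia.
Qed.

Theorem mainTheorem17 (n : nat) :
  0 < n ->
  (forall k : nat, iter k collatz n <> 1) ->
  forall r : nat, r \in [:: 2; 3; 4; 6] ->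
    exists k : nat, iter k collatz n = r %[mod 8].
Proof.
move=> Hn H1 r Hr.
have [k0 Hk0] := @lemD n Hn H1.
have [k1 Hk1] := @lem3 _ Hk0.
rewrite -iterD in Hk1.
set z := iter (k1 + k0) collatz n in Hk1.
have Hz1 : iter 1 collatz z = 3 * z + 1 by rewrite /= c_odd //; lia.
have Hz2 : iter 2 collatz z = (3 * z + 1) %/ 2
  by rewrite iterS Hz1 c_even //; lia.
have Hz3 : iter 3 collatz z = 3 * ((3 * z + 1) %/ 2) + 1
  by rewrite iterS Hz2 c_odd //; lia.
have Hzp : 0 < z by apply: iter_pos.
rewrite !inE in Hr.
case/orP: Hr => [/eqP ->|Hr].
  by exists (1 + (k1 + k0)); rewrite iterD -/z Hz1; lia.
case/orP: Hr => [/eqP ->|Hr].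
  by exists (k1 + k0); rewrite -/z; lia.
case/orP: Hr => [/eqP ->|/eqP ->].
  have [k2 Hk2] : exists k, iter k collatz (iter 3 collatz z) %% 8 = 4.
    by apply: lemF; rewrite Hz3; lia.
  by exists (k2 + (3 + (k1 + k0))); rewrite 2!iterD -/z; lia.
have [k Hk] : exists k, iter k collatz (iter 1 collatz n) %% 4 = 3.
  apply: lemD; first by apply: iter_pos.
  by move=> k; rewrite -iterD; apply: H1.
rewrite -iterD addn1 iterS in Hk.
exists k.
have Hp := @iter_pos k n Hn.
case: (boolP (iter k collatz n %% 2 == 0)) => [/eqP h|/eqP h].
- by move: Hk; rewrite c_even //; lia.
- by move: Hk; rewrite c_odd; lia.
Qed.
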